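(* VD satisfies stability: for every finite candidate set $C$, every profile $P$ over $C$ and every ballot $A\subseteq C$, $\mathrm{VD}(P)\cap\mathrm{VD}(P+\{A\})\neq\emptyset$. In contrast, for each $f\in\{\mathrm{MF},\mathrm{BC},\mathrm{MS},\mathrm{FT}\}$ there exist a finite candidate set $C$, a profile $P$ and a ballot $A$ over $C$ with $f(P)\cap f(P+\{A\})=\emptyset$.
   Context: Let $C$ be a finite set of candidates. An approval ballot is a nonempty subset $A\subseteq C$; a profile is a finite sequence of ballots; $P+\{A\}$ is $P$ with the ballot $A$ appended. An axis is a strict linear order $\triangleleft$ on $C$; $a\trianglelefteq b$ means $a\triangleleft b$ or $a=b$. A ballot $A$ is an interval of $\triangleleft$ if for all $a,b\in A$ and every $c$ with $a\triangleleft c\triangleleft b$ we have $c\in A$. For a cost function $\mathrm{cost}_f$, the associated scoring rule returns $f(P)=\arg\min_{\triangleleft}\sum_{A\in P}\mathrm{cost}_f(A,\triangleleft)$ over all axes on $C$. The five rules VD, MF, BC, MS, FT are the scoring rules with costs: $\mathrm{cost}_{\mathrm{VD}}(A,\triangleleft)=0$ if $A$ is an interval of $\triangleleft$ and $1$ otherwise; $\mathrm{cost}_{\mathrm{MF}}(A,\triangleleft)=\min_{x,y\in A,\ x\trianglelefteq y}\big(|\{z\in A: z\triangleleft x \text{ or } y\triangleleft z\}|+|\{z\notin A: x\triangleleft z\triangleleft y\}|\big)$; $\mathrm{cost}_{\mathrm{BC}}(A,\triangleleft)=|\{b\notin A: a\triangleleft b\triangleleft c \text{ for some } a,c\in A\}|$;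 $\mathrm{cost}_{\mathrm{MS}}(A,\triangleleft)=\sum_{x\in C\setminus A}\min\big(|\{y\in A:y\triangleleft x\}|,\,|\{y\in A:x\triangleleft y\}|\big)$; $\mathrm{cost}_{\mathrm{FT}}(A,\triangleleft)=\sum_{x\in C\setminus A}|\{y\in A:y\triangleleft x\}|\cdot|\{y\in A:x\triangleleft y\}|$. *)

(* Defs.v *)
From mathcomp Require Import all_boot.
Set Implicit Arguments. Unset Strict Implicit. Unset Printing Implicit Defensive.

Definition is_axis (C : finType) (lt : rel C) : Prop :=
  (forall x, ~~ lt x x) /\
  (forall x y z, lt x y -> lt y z -> lt x z) /\
  (forall x y, x != y -> lt x y || lt y x).

Definition axle (C : finType) (lt : rel C) (a b : C) : bool := lt a b || (a == b).

Definition ballot (C : finType) (A : {set C}) : Prop := A != set0.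
Definition profile (C : finType) (P : seq {set C}) : Prop := all (fun A => A != set0) P.

Definition is_interval (C : finType) (A : {set C}) (lt : rel C) : bool :=
  [forall a in A, forall b in A, forall c, (lt a c && lt c b) ==> (c \in A)].

Definition cost_VD (C : finType) (A : {set C}) (lt : rel C) : nat :=
  if is_interval A lt then 0 else 1.

(* min over x,y in A with x <|= y; each term is <= #|C| (it counts two disjoint
   subsets of C), so #|C| is a neutral starting value for the minimum. *)
Definition cost_MF (C : finType) (A : {set C}) (lt : rel C) : nat :=
  \big[minn/#|C|]_(x in A) \big[minn/#|C|]_(y in A | axle lt x y)
     (#|[set z in A | lt z x || lt y z]| + #|[set z in ~: A | lt x z && lt z y]|).

Definition cost_BC (C : finType) (A : {set C}) (lt : rel C) : nat :=
  #|[set b in ~: A | [exists a in A, exists c in A, lt a b && lt b c]]|.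

Definition cost_MS (C : finType) (A : {set C}) (lt : rel C) : nat :=
  \sum_(x in ~: A) minn #|[set y in A | lt y x]| #|[set y in A | lt x y]|.

Definition cost_FT (C : finType) (A : {set C}) (lt : rel C) : nat :=
  \sum_(x in ~: A) (#|[set y in A | lt y x]| * #|[set y in A | lt x y]|).

Definition total_cost (C : finType) (cost : {set C} -> rel C -> nat)
  (P : seq {set C}) (lt : rel C) : nat := \sum_(A <- P) cost A lt.

Definition in_rule (C : finType) (cost : {set C} -> rel C -> nat)
  (P : seq {set C}) (lt : rel C) : Prop :=
  is_axis lt /\ forall lt', is_axis lt' -> total_cost cost P lt <= total_cost cost P lt'.

Definition stable_instance (C : finType) (cost : {set C} -> rel C -> nat)
  (P : seq {set C}) (A : {set C}) : Prop :=
  exists lt, in_rule cost P lt /\ in_rule cost (rcons P A) lt.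

(* Main.v *)
Require Import Defs.
From mathcomp Require Import all_boot.
From mathcomp Require Import zify.
From Stdlib Require Import Classical FunctionalExtensionality.
Set Implicit Arguments. Unset Strict Implicit. Unset Printing Implicit Defensive.

Lemma ex_min (Q : nat -> Prop) n : Q n -> exists m, Q m /\ forall k, Q k -> m <= k.
Proof.
elim: n {-2}n (leqnn n) => [|n IH] k hk Qk.
  by exists k; split=> // j _; move: hk; rewrite leqn0 => /eqP ->.
case: (classic (exists j, Q j /\ j < k)) => [[j [Qj jk]]|H].
  by apply: (IH j) => //; lia.
exists k; split=> // j Qj; rewrite leqNgt; apply/negP=> jk; apply: H; by exists j.
Qed.

Lemma total_cost_rcons (C : finType) cost (P : seq {set C}) A lt :
  total_cost cost (rcons P A) lt = total_cost cost P lt + cost A lt.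
Proof. by rewrite /total_cost -cats1 big_cat big_seq1. Qed.

Lemma exists_axis (C : finType) : exists lt : rel C, is_axis lt.
Proof.
exists (fun x y => enum_rank x < enum_rank y); split; first by move=> x; rewrite ltnn.
split; first by move=> x y z; apply: ltn_trans.
move=> x y hxy; rewrite -neq_ltn; apply: contra hxy => /eqP h.
by apply/eqP; apply: enum_rank_inj; apply: val_inj.
Qed.

Lemma VD_stable (C : finType) (P : seq {set C}) (A : {set C}) :
  stable_instance (@cost_VD C) P A.
Proof.
pose f lt := 2 * total_cost (@cost_VD C) P lt + cost_VD A lt.
have [lt0 ax0] := exists_axis C.
have [m [[lt [axl flt]] hmin]] :=
  @ex_min (fun m => exists lt, is_axis lt /\ f lt = m) (f lt0) (ex_intro _ lt0 (conj ax0 erefl)).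
have vle1 : forall l, cost_VD A l <= 1 by move=> l; rewrite /cost_VD; case: ifP.
have key : forall lt', is_axis lt' -> f lt <= f lt'.
  by move=> lt' ax'; rewrite flt; apply: hmin; exists lt'.
exists lt; split; split=> // lt' ax'; have := key lt' ax'; rewrite /f;
  have := vle1 lt; have := vle1 lt'; rewrite ?total_cost_rcons; lia.
Qed.
Definition ltp (n : nat) (p : seq nat) : rel 'I_n :=
  fun x y => index (val x) p < index (val y) p.
Definition fromseq (n : nat) (a : seq nat) : {set 'I_n} := [set x | val x \in a].
Definition perms n := permutations (iota 0 n).
Arguments ltp n p : clear implicits.
Arguments fromseq n a : clear implicits.

Lemma ltp_axis n p : p \in perms n -> is_axis (ltp n p).
Proof.
rewrite /perms mem_permutations => /perm_mem hp.
split; first by move=> x; rewrite /ltp ltnn.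
split; first by move=> x y z; rewrite /ltp; apply: ltn_trans.
move=> x y hxy; rewrite /ltp -neq_ltn; apply: contra hxy => /eqP h.
have mx : val x \in p by rewrite hp mem_iota /= add0n ltn_ord.
have my : val y \in p by rewrite hp mem_iota /= add0n ltn_ord.
by apply/eqP; apply: val_inj; apply: (index_inj 0 mx my).
Qed.

Lemma axis_ltp n (lt : rel 'I_n) : is_axis lt -> exists2 q, q \in perms n & lt = ltp n q.
Proof.
move=> [irr [tr tot]].
set s := sort (axle lt) (enum 'I_n).
have axtot : total (axle lt).
  move=> x y; rewrite /axle; case: (eqVneq x y) => [->|/tot]; first by rewrite !orbT.
  by case/orP=> ->; rewrite ?orbT.
have axtr : transitive (axle lt).
  move=> y x z; rewrite /axle => /orP[hxy|/eqP->] /orP[hyz|/eqP<-];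
  by rewrite ?(tr _ _ _ hxy hyz) ?hxy ?hyz ?eqxx ?orbT.
have ss : sorted (axle lt) s by apply: sort_sorted.
have us : uniq s by rewrite sort_uniq enum_uniq.
have ms : forall x, x \in s by move=> x; rewrite mem_sort mem_enum.
exists (map val s).
  rewrite /perms mem_permutations -val_enum_ord; apply: perm_map.
  by rewrite perm_sort.
apply: functional_extensionality => x; apply: functional_extensionality => y.
rewrite /ltp !(index_map val_inj).
case hi: (index x s < index y s).
  have := sorted_ltn_index axtr ss _ _ (ms x) (ms y) hi; rewrite /axle.
  case/orP=> // /eqP exy; by move: hi; rewrite exy ltnn.
apply/negP=> hxy; move/negbT: hi; rewrite -leqNgt leq_eqVlt => /orP[/eqP e|hyx].
  have : x = y by rewrite -(nth_index x (ms x)) -(nth_index x (ms y)) e.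
  by move=> exy; move: hxy; rewrite exy (negbTE (irr y)).
have := sorted_ltn_index axtr ss _ _ (ms y) (ms x) hyx; rewrite /axle.
case/orP=> [hyx'|/eqP eyx]; first by move: (irr x); rewrite (tr _ _ _ hxy hyx').
by move: hxy; rewrite eyx (negbTE (irr x)).
Qed.

Lemma big_ordQ (R : Type) (op : R -> R -> R) idx n (P : pred 'I_n) (Q : pred nat)
  (F : 'I_n -> R) (G : nat -> R) :
  (forall x, P x = Q (val x)) -> (forall x, Q (val x) -> F x = G (val x)) ->
  \big[op/idx]_(x | P x) F x = \big[op/idx]_(0 <= i < n | Q i) G i.
Proof.
move=> hP hF; rewrite big_mkord; apply: eq_big => x; first exact: hP.
by move=> hq; apply: hF; rewrite -hP.
Qed.

Lemma cardP n (S : {set 'I_n}) (Q : pred nat) :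
  (forall z, (z \in S) = Q (val z)) -> #|S| = count Q (iota 0 n).
Proof.
move=> h; rewrite -sum1_card -sum1_count.
have -> : iota 0 n = index_iota 0 n by rewrite /index_iota subn0.
by apply: big_ordQ.
Qed.

Lemma existsP' n (Q : pred nat) : [exists z : 'I_n, Q (val z)] = has Q (iota 0 n).
Proof.
apply/existsP/hasP => [[z hz]|[i hi hq]].
  by exists (val z) => //; rewrite mem_iota /= add0n ltn_ord.
have hin : i < n by move: hi; rewrite mem_iota add0n.
by exists (Ordinal hin).
Qed.

Definition pos (p : seq nat) i := index i p.

Definition msc n (a p : seq nat) :=
  \sum_(0 <= x < n | x \notin a)
    minn (count (fun y => (y \in a) && (pos p y < pos p x)) (iota 0 n))
         (count (fun y => (y \in a) && (pos p x < pos p y)) (iota 0 n)).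
Definition ftc n (a p : seq nat) :=
  \sum_(0 <= x < n | x \notin a)
    (count (fun y => (y \in a) && (pos p y < pos p x)) (iota 0 n) *
     count (fun y => (y \in a) && (pos p x < pos p y)) (iota 0 n)).
Definition bcc n (a p : seq nat) :=
  count (fun b => (b \notin a) && has (fun x => (x \in a) && has (fun z => (z \in a) &&
     ((pos p x < pos p b) && (pos p b < pos p z))) (iota 0 n)) (iota 0 n)) (iota 0 n).
Definition mfc n (a p : seq nat) :=
  \big[minn/n]_(0 <= x < n | x \in a) \big[minn/n]_(0 <= y < n | (y \in a) && ((pos p x < pos p y) || (x == y)))
   (count (fun z => (z \in a) && ((pos p z < pos p x) || (pos p y < pos p z))) (iota 0 n) +
    count (fun z => (z \notin a) && ((pos p x < pos p z) && (pos p z < pos p y))) (iota 0 n)).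

Lemma ms_eq n a p : cost_MS (fromseq n a) (ltp n p) = msc n a p.
Proof.
rewrite /cost_MS /msc; apply: big_ordQ => [x|x _]; first by rewrite !inE.
by congr minn; apply: cardP => z; rewrite !inE.
Qed.
Lemma ft_eq n a p : cost_FT (fromseq n a) (ltp n p) = ftc n a p.
Proof.
rewrite /cost_FT /ftc; apply: big_ordQ => [x|x _]; first by rewrite !inE.
by congr muln; apply: cardP => z; rewrite !inE.
Qed.
Lemma bc_eq n a p : cost_BC (fromseq n a) (ltp n p) = bcc n a p.
Proof.
rewrite /cost_BC /bcc; apply: cardP => z; rewrite !inE; congr andb.
rewrite -existsP'; apply: eq_existsb => x; rewrite !inE -existsP'; congr andb.
by apply: eq_existsb => y; rewrite !inE.
Qed.
Lemma mf_eq n a p : cost_MF (fromseq n a) (ltp n p) = mfc n a p.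
Proof.
rewrite /cost_MF /mfc card_ord; apply: big_ordQ => [x|x _]; first by rewrite !inE.
apply: big_ordQ => [y|y _]; first by rewrite !inE /axle.
by congr addn; apply: cardP => z; rewrite !inE.
Qed.

Lemma total_cost_map n (cost : {set 'I_n} -> rel 'I_n -> nat) c' (As : seq (seq nat)) p :
  (forall a, cost (fromseq n a) (ltp n p) = c' a p) ->
  total_cost cost (map (fromseq n) As) (ltp n p) = \sum_(a <- As) c' a p.
Proof. by move=> h; rewrite /total_cost big_map; apply: eq_bigr => a _. Qed.

Lemma unstable n (cost : {set 'I_n} -> rel 'I_n -> nat) (c' : seq nat -> seq nat -> nat)
  (As : seq (seq nat)) (a : seq nat) p1 p2 :
  (forall a p, cost (fromseq n a) (ltp n p) = c' a p) ->
  p1 \in perms n -> p2 \in perms n ->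
  all (fun q => (\sum_(b <- As) c' b p1 < \sum_(b <- As) c' b q) ||
                (\sum_(b <- rcons As a) c' b p2 < \sum_(b <- rcons As a) c' b q)) (perms n) ->
  ~ stable_instance cost (map (fromseq n) As) (fromseq n a).
Proof.
move=> hc hp1 hp2 /allP hall [lt [[axl oP] [_ oPA]]].
have [q hq elt] := axis_ltp axl.
have h1 := oP _ (ltp_axis hp1). have h2 := oPA _ (ltp_axis hp2).
move: h1 h2; rewrite -map_rcons elt !(total_cost_map _ (fun b => hc b q)) !(total_cost_map _ (fun b => hc b p1)) !(total_cost_map _ (fun b => hc b p2)).
by have := hall q hq; case/orP; lia.
Qed.

Lemma fromseq_neq0 n a : has (fun i => i < n) a -> fromseq n a != set0.
Proof.
case/hasP=> i ia hin; apply/set0Pn; exists (Ordinal hin); by rewrite inE.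
Qed.

Ltac fin := rewrite /perms /msc /ftc /bcc /mfc /pos; rewrite ?unlock; vm_compute; reflexivity.

Lemma inst_MF : exists (C : finType) (P : seq {set C}) (A : {set C}),
      profile P /\ ballot A /\ ~ stable_instance (@cost_MF C) P A.
Proof.
exists 'I_5, (map (fromseq 5) [:: [:: 0; 3]; [:: 1; 2; 3]; [:: 1; 3]; [:: 1; 2; 3; 4]]), (fromseq 5 [:: 0; 1; 4]).
split; first by rewrite /profile /= !fromseq_neq0.
split; first by rewrite /ballot fromseq_neq0.
apply: (@unstable 5 _ (mfc 5) _ _ [:: 0; 3; 1; 2; 4] [:: 0; 4; 1; 3; 2]); first exact: mf_eq.
- by fin.
- by fin.
fin.
Qed.

Lemma inst_BC : exists (C : finType) (P : seq {set C}) (A : {set C}),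
      profile P /\ ballot A /\ ~ stable_instance (@cost_BC C) P A.
Proof.
exists 'I_4, (map (fromseq 4) [:: [:: 0; 2; 3]; [:: 0; 1; 2]]), (fromseq 4 [:: 1; 3]).
split; first by rewrite /profile /= !fromseq_neq0.
split; first by rewrite /ballot fromseq_neq0.
apply: (@unstable 4 _ (bcc 4) _ _ [:: 1; 0; 2; 3] [:: 0; 2; 1; 3]); first exact: bc_eq.
- by fin.
- by fin.
fin.
Qed.

Lemma inst_MS : exists (C : finType) (P : seq {set C}) (A : {set C}),
      profile P /\ ballot A /\ ~ stable_instance (@cost_MS C) P A.
Proof.
exists 'I_4, (map (fromseq 4) [:: [:: 0; 1; 2]; [:: 0; 1; 3]]), (fromseq 4 [:: 2; 3]).
split; first by rewrite /profile /= !fromseq_neq0.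
split; first by rewrite /ballot fromseq_neq0.
apply: (@unstable 4 _ (msc 4) _ _ [:: 2; 0; 1; 3] [:: 0; 1; 2; 3]); first exact: ms_eq.
- by fin.
- by fin.
fin.
Qed.

Lemma inst_FT : exists (C : finType) (P : seq {set C}) (A : {set C}),
      profile P /\ ballot A /\ ~ stable_instance (@cost_FT C) P A.
Proof.
exists 'I_4, (map (fromseq 4) [:: [:: 1; 3]; [:: 0; 1]]), (fromseq 4 [:: 0; 2; 3]).
split; first by rewrite /profile /= !fromseq_neq0.
split; first by rewrite /ballot fromseq_neq0.
apply: (@unstable 4 _ (ftc 4) _ _ [:: 0; 1; 3; 2] [:: 1; 0; 3; 2]); first exact: ft_eq.
- by fin.
- by fin.
fin.
Qed.

Theorem mainTheorem5 :
  (forall (C : finType) (P : seq {set C}) (A : {set C}),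
      profile P -> ballot A -> stable_instance (@cost_VD C) P A) /\
  (exists (C : finType) (P : seq {set C}) (A : {set C}),
      profile P /\ ballot A /\ ~ stable_instance (@cost_MF C) P A) /\
  (exists (C : finType) (P : seq {set C}) (A : {set C}),
      profile P /\ ballot A /\ ~ stable_instance (@cost_BC C) P A) /\
  (exists (C : finType) (P : seq {set C}) (A : {set C}),
      profile P /\ ballot A /\ ~ stable_instance (@cost_MS C) P A) /\
  (exists (C : finType) (P : seq {set C}) (A : {set C}),
      profile P /\ ballot A /\ ~ stable_instance (@cost_FT C) P A).
Proof.
split; first by move=> C P A _ _; apply: VD_stable.
split; first exact: inst_MF.
split; first exact: inst_BC.
split; first exact: inst_MS.
exact: inst_FT.
Qed.
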